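(* Fix $p\ge2$. There exist $W\in\mathbb{R}^{36p\times p}$ and $V\in\mathbb{R}^{p\times 36p}$ such that the ReLU network $s^\theta(x)=V\,\mathrm{ReLU}(Wx)$ of width $d=36p$ satisfies, for all $x\in\mathcal{X}_2$, \[ h_\theta(x)=y(x),\qquad s^\theta_{y(x)}(x)-\max_{q\ne y(x)}s^\theta_q(x)\ \ge\ \frac{25}{49}p+\frac{20}{49}, \] and $\|W\|_\infty\le1$, $\|V\|_\infty\le\frac{34}{7}$, $\|V\|_2\le 11\sqrt p$.
   Context: Let $[p]=\{0,\dots,p-1\}$ and $\mathcal{X}_2=\{x\in\{0,1,2\}^p:\|x\|_1=2\}$, coordinates indexed by $[p]$; $y(x)=(\sum_{r\in[p]}r\,x_r)\bmod p$. $\mathrm{ReLU}(t)=\max\{0,t\}$ entrywise. The predictor is $h_\theta(x)=\ell$ if $s^\theta_\ell(x)>s^\theta_k(x)$ for all $k\ne\ell$, and $\bot$ otherwise. For a matrix, $\|\cdot\|_\infty$ is the maximum absolute entry and $\|\cdot\|_2$ the spectral norm. *)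

(* Defs.v *)
From HB Require Import structures.
From mathcomp Require Import all_boot all_order all_algebra.
From mathcomp Require Import classical_sets reals.
Set Implicit Arguments. Unset Strict Implicit. Unset Printing Implicit Defensive.
Import Order.TTheory GRing.Theory Num.Theory.
Local Open Scope ring_scope.
Local Open Scope classical_set_scope.

Section Defs.
Variable R : realType.

Definition relu (m n : nat) (A : 'M[R]_(m, n)) : 'M[R]_(m, n) :=
  map_mx (fun t => Num.max 0 t) A.

Definition scores (p d : nat) (W : 'M[R]_(d, p)) (V : 'M[R]_(p, d))
  (x : 'cV[R]_p) : 'cV[R]_p := V *m relu (W *m x).

(* predictor: Some l if s_l > s_k for all k <> l, None (= bottom) otherwise *)
Definition predict (p : nat) (s : 'cV[R]_p) : option 'I_p :=
  [pick l | [forall k, (k != l) ==> (s k 0 < s l 0)]].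

Definition max_other (p : nat) (s : 'cV[R]_p) (l : 'I_p) : R :=
  sup [set s q 0 | q in [set q : 'I_p | q != l]].

Definition maxabs (m n : nat) (A : 'M[R]_(m, n)) : R :=
  \big[Num.max/0]_(i < m) \big[Num.max/0]_(j < n) `|A i j|.

Definition vnorm (n : nat) (x : 'cV[R]_n) : R :=
  Num.sqrt (\sum_(i < n) x i 0 ^+ 2).

Definition specnorm (m n : nat) (A : 'M[R]_(m, n)) : R :=
  sup [set vnorm (A *m x) | x in [set x : 'cV[R]_n | vnorm x <= 1]].

End Defs.

(* points of X_2 given by their coordinates c : [p] -> {0,1,2}, ||c||_1 = 2 *)
Definition inX2 (p : nat) (c : 'I_p -> nat) : Prop :=
  (forall r, c r <= 2)%N /\ (\sum_(r < p) c r = 2)%N.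

Definition embed (R : realType) (p : nat) (c : 'I_p -> nat) : 'cV[R]_p :=
  \col_(r < p) (c r)%:R.

Definition label (p : nat) (c : 'I_p -> nat) : nat :=
  ((\sum_(r < p) (r : nat) * c r) %% p)%N.

(* Main.v *)
Require Import Defs.
From HB Require Import structures.
From mathcomp Require Import all_boot all_order all_algebra.
From mathcomp Require Import classical_sets reals.
From mathcomp Require Import trigo.
From mathcomp Require Import ring lra zify.
Import Order.TTheory GRing.Theory Num.Theory.
Local Open Scope ring_scope.



Section Fam.
Variable R : realType.
Implicit Types (x y s : R).

Lemma max0_id x : 0 <= x -> Num.max 0 x = x.
Proof. by move=> h; rewrite max_r. Qed.
Lemma max0_0 x : x <= 0 -> Num.max 0 x = 0.
Proof. by move=> h; rewrite max_l. Qed.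

Definition qh s : R := Num.max 0 (s/2) + Num.max 0 (-s/2)
  + 2 * Num.max 0 ((s-1)/2) + 2 * Num.max 0 ((-s-1)/2).

Lemma qh_bound s : -2 <= s <= 2 -> 0 <= qh s - s^+2/2 <= 1/8.
Proof.
move=> /andP[h1 h2]; rewrite /qh.
have [a1|a1] := lerP s (-1).
  rewrite (max0_0 (s/2)) ?(max0_id (-s/2)) ?(max0_0 ((s-1)/2))
     ?(max0_id ((-s-1)/2)); try lra.
  have P1 : 0 <= (s + 2) * (-1 - s) by apply: mulr_ge0; lra.
  have P2 := sqr_ge0 (s + 3/2).
  rewrite !expr2 in P2 *; apply/andP; split; nra.
have [a2|a2] := lerP s 0.
  rewrite (max0_0 (s/2)) ?(max0_id (-s/2)) ?(max0_0 ((s-1)/2))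
     ?(max0_0 ((-s-1)/2)); try lra.
  have P1 : 0 <= (- s) * (s + 1) by apply: mulr_ge0; lra.
  have P2 := sqr_ge0 (s + 1/2).
  rewrite !expr2 in P2 *; apply/andP; split; nra.
have [a3|a3] := lerP s 1.
  rewrite (max0_id (s/2)) ?(max0_0 (-s/2)) ?(max0_0 ((s-1)/2))
     ?(max0_0 ((-s-1)/2)); try lra.
  have P1 : 0 <= s * (1 - s) by apply: mulr_ge0; lra.
  have P2 := sqr_ge0 (s - 1/2).
  rewrite !expr2 in P2 *; apply/andP; split; nra.
rewrite (max0_id (s/2)) ?(max0_0 (-s/2)) ?(max0_id ((s-1)/2))
     ?(max0_0 ((-s-1)/2)); try lra.
have P1 : 0 <= (s - 1) * (2 - s) by apply: mulr_ge0; lra.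
have P2 := sqr_ge0 (s - 3/2).
rewrite !expr2 in P2 *; apply/andP; split; nra.
Qed.

Definition wt (t : nat) (y : R) : R :=
  match t with
  | 0 => cos y / 2
  | 1 => - cos y / 2
  | 2 => (cos y - 1/2) / 2
  | 3 => (- cos y - 1/2) / 2
  | 4 => sin y / 2
  | 5 => - sin y / 2
  | 6 => (sin y - 1/2) / 2
  | 7 => (- sin y - 1/2) / 2
  | 8 => (1 + cos (y *+ 2)) / 2
  | 9 => (1 - cos (y *+ 2)) / 2
  | _ => 0
  end.

Definition co (t : nat) : R :=
  match t with
  | 0 => 1 | 1 => 1 | 2 => 2 | 3 => 2
  | 4 => -1 | 5 => -1 | 6 => -2 | 7 => -2
  | 8 => -(1/2) | 9 => 1/2 | _ => 0
  end.

Definition fam y1 y2 : R :=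
  \sum_(0 <= t < 10) co t * Num.max 0 (wt t y1 + wt t y2).

Lemma famE y1 y2 : fam y1 y2 =
  qh (cos y1 + cos y2) - qh (sin y1 + sin y2) - (cos (y1 *+ 2) + cos (y2 *+ 2)) / 2.
Proof.
rewrite /fam !big_nat_recl // big_geq // /= /qh.
have c1 := cos_le1 (y1 *+ 2); have c2 := cos_le1 (y2 *+ 2).
have c3 := cos_geN1 (y1 *+ 2); have c4 := cos_geN1 (y2 *+ 2).
rewrite (max0_id ((1 + cos (y1 *+ 2)) / 2 + (1 + cos (y2 *+ 2)) / 2)); last lra.
rewrite (max0_id ((1 - cos (y1 *+ 2)) / 2 + (1 - cos (y2 *+ 2)) / 2)); last lra.
have E1 : cos y1 / 2 + cos y2 / 2 = (cos y1 + cos y2)/2 by field.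
have E2 : - cos y1 / 2 + - cos y2 / 2 = - (cos y1 + cos y2)/2 by field.
have E3 : (cos y1 - 1/2) / 2 + (cos y2 - 1/2) / 2 = ((cos y1 + cos y2) - 1)/2 by field.
have E4 : (- cos y1 - 1/2) / 2 + (- cos y2 - 1/2) / 2 = (- (cos y1 + cos y2) - 1)/2 by field.
have F1 : sin y1 / 2 + sin y2 / 2 = (sin y1 + sin y2)/2 by field.
have F2 : - sin y1 / 2 + - sin y2 / 2 = - (sin y1 + sin y2)/2 by field.
have F3 : (sin y1 - 1/2) / 2 + (sin y2 - 1/2) / 2 = ((sin y1 + sin y2) - 1)/2 by field.
have F4 : (- sin y1 - 1/2) / 2 + (- sin y2 - 1/2) / 2 = (- (sin y1 + sin y2) - 1)/2 by field.
rewrite E1 E2 E3 E4 F1 F2 F3 F4.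
set A1 := Num.max 0 ((cos y1 + cos y2) / 2).
set A2 := Num.max 0 (- (cos y1 + cos y2) / 2).
set A3 := Num.max 0 ((cos y1 + cos y2 - 1) / 2).
set A4 := Num.max 0 ((- (cos y1 + cos y2) - 1) / 2).
set B1 := Num.max 0 ((sin y1 + sin y2) / 2).
set B2 := Num.max 0 (- (sin y1 + sin y2) / 2).
set B3 := Num.max 0 ((sin y1 + sin y2 - 1) / 2).
set B4 := Num.max 0 ((- (sin y1 + sin y2) - 1) / 2).
lra.
Qed.

Lemma fam_bound y1 y2 : `|fam y1 y2 - cos (y1 + y2)| <= 1/8.
Proof.
rewrite famE.
have hc : -2 <= cos y1 + cos y2 <= 2.
  have := cos_le1 y1; have := cos_le1 y2; have := cos_geN1 y1; have := cos_geN1 y2.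
  move=> *; apply/andP; split; lra.
have hs : -2 <= sin y1 + sin y2 <= 2.
  have := sin_le1 y1; have := sin_le1 y2; have := sin_geN1 y1; have := sin_geN1 y2.
  move=> *; apply/andP; split; lra.
move: (qh_bound _ hc) (qh_bound _ hs) => /andP[q1 q2] /andP[q3 q4].
have id : cos (y1 + y2) = ((cos y1 + cos y2)^+2/2 - (sin y1 + sin y2)^+2/2
   - (cos (y1 *+ 2) + cos (y2 *+ 2)) / 2).
  rewrite cosD !cos_mulr2n.
  have := cos2Dsin2 y1; have := cos2Dsin2 y2. move=> e1 e2.
  rewrite !expr2 in e1 e2 *; nra.
rewrite id ler_norml; apply/andP; split; lra.
Qed.

End Fam.



Section Trig.
Variable R : realType.

Definition alpha (p k r : nat) : R := pi *+ 2 * (k%:R * r%:R) / p%:R.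

Lemma alpha_shift p k r m : (0 < p)%N ->
  alpha p k (m * p + r) = alpha p k r + (pi *+ 2) *+ (k * m).
Proof.
move=> hp; rewrite /alpha -mulr_natr !natrD !natrM.
have hp' : (p%:R : R) != 0 by rewrite pnatr_eq0 -lt0n.
by field.
Qed.

Lemma cos_alpha_mod p k N : (0 < p)%N -> cos (alpha p k N) = cos (alpha p k (N %% p)).
Proof.
move=> hp; rewrite {1}(divn_eq N p) alpha_shift //.
by rewrite (periodicn (@cosD2pi R)).
Qed.

Lemma cos_sum (p N : nat) : (0 < p)%N ->
  \sum_(k < p) cos (alpha p k N) = if (p %| N)%N then p%:R else 0.
Proof.
move=> hp.
under eq_bigr => k _ do rewrite (cos_alpha_mod _ _ _ hp).
case: ifP => hd.
  have -> : (N %% p = 0)%N by apply/eqP; rewrite -/(dvdn p N).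
  under eq_bigr => k _ do rewrite /alpha mulr0 mulr0 mul0r cos0.
  by rewrite sumr_const card_ord.
set r := (N %% p)%N.
have r0 : (0 < r)%N by rewrite lt0n; rewrite /r; apply/negP => /eqP h; move: hd; rewrite /dvdn h.
have rp : (r < p)%N by rewrite /r ltn_mod.
set h : R := pi * r%:R / p%:R.
have hp' : (0 : R) < p%:R by rewrite ltr0n.
have hh : 0 < sin h.
  apply: sin_gt0_pi; apply/andP; split.
    by rewrite /h mulr_gt0 // ?invr_gt0 // mulr_gt0 ?pi_gt0 // ltr0n.
  rewrite /h ltr_pdivrMr // ltr_pM2l ?pi_gt0 // ltr_nat //.
pose g (k : nat) : R := sin (k%:R * 2 * h - h).
have step : forall k : nat, g k.+1 - g k = (sin h *+ 2) * cos (alpha p k r).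
  move=> k; rewrite /g.
  have -> : (k.+1%:R * 2 * h - h) = k%:R * 2 * h + h by rewrite -addn1 natrD; ring.
  rewrite sinD sinB.
  have -> : alpha p k r = k%:R * 2 * h by rewrite /alpha /h; field; rewrite gt_eqF.
  rewrite mulr2n; ring.
have tel : \sum_(0 <= k < p) (g k.+1 - g k) = 0.
  rewrite telescope_sumr // /g.
  have -> : p%:R * 2 * h - h = - h + (pi *+ 2) *+ r.
    rewrite /h -mulr_natr; field; rewrite gt_eqF //.
  rewrite (periodicn (@sinD2pi R)) mul0r mul0r sub0r subrr //.
have : (sin h *+ 2) * \sum_(k < p) cos (alpha p k r) = 0.
  rewrite mulr_sumr -[in RHS]tel big_mkord; apply: eq_bigr => k _; by rewrite step.
move/eqP; rewrite mulf_eq0 => /orP[|/eqP //].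
by rewrite mulrn_eq0 /= (gt_eqF hh).
Qed.

End Trig.



Lemma inX2_pair p (c : 'I_p -> nat) : inX2 c ->
  exists a b : 'I_p, forall r, c r = ((r == a) + (r == b))%N.
Proof.
rewrite /inX2 => -[hle hsum].
have [a ha] : exists a, c a != 0%N.
  case: (pickP (fun a => c a != 0%N)) => [a ha|h]; first by exists a.
  exfalso; move: hsum; rewrite big1 // => r _; move: (h r) => /negbFE /eqP //.
rewrite (bigD1 a) //= in hsum.
have := hle a; have : (c a = 1 \/ c a = 2)%N by lia.
case=> ca _.
  have hr : (\sum_(r | r != a) c r = 1)%N by move: hsum; rewrite ca add1n => -[].
  have [b /andP[hba hb]] : exists b, (b != a) && (c b != 0%N).
    case: (pickP (fun b => (b != a) && (c b != 0%N))) => [b hb|h]; first by exists b.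
    exfalso; move: hr; rewrite big1 // => r hra; move: (h r); rewrite hra /= => /negbFE /eqP //.
  rewrite (bigD1 b) //= in hr.
  have cb : c b = 1%N by lia.
  have h0 : (\sum_(i | (i != a) && (i != b)) c i == 0)%N by move: hr; rewrite cb add1n => -[] ->.
  move: h0; rewrite sum_nat_eq0 => /forallP h0.
  exists a, b => r.
  case: (eqVneq r a) => [->|hra]; first by rewrite eq_sym (negPf hba) ca.
  case: (eqVneq r b) => [->|hrb]; first by rewrite cb.
  by move: (h0 r); rewrite hra hrb /= => /eqP ->.
have hr : (\sum_(r | r != a) c r == 0)%N by move: hsum; rewrite ca => -[]; rewrite add0n => ->.
move: hr; rewrite sum_nat_eq0 => /forallP h0.
exists a, a => r.
case: (eqVneq r a) => [->|hra]; first by rewrite ca.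
by move: (h0 r); rewrite hra /= => /eqP ->.
Qed.

Section S.
Variable R : realType.

Lemma sum36n (F : nat -> nat -> R) n :
  \sum_(0 <= u < 36 * n) F (u %/ 36)%N (u %% 36)%N = \sum_(0 <= k < n) \sum_(j < 36) F k j.
Proof.
elim: n => [|n IH]; first by rewrite muln0 !big_geq.
rewrite [RHS]big_nat_recr // -IH.
rewrite mulnSr (big_cat_nat (leq0n (36 * n)) (leq_addr 36 (36 * n))).
congr (_ + _).
rewrite -{1}(add0n (36 * n)%N) big_addn addKn big_mkord; apply: eq_bigr => j _.
have hj := ltn_ord j.
congr F; lia.
Qed.

Lemma sum36 (F : nat -> nat -> R) n :
  \sum_(u < 36 * n) F (u %/ 36)%N (u %% 36)%N = \sum_(k < n) \sum_(j < 36) F k j.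
Proof.
rewrite -(big_mkord xpredT (fun u => F (u %/ 36)%N (u %% 36)%N)) sum36n.
by rewrite big_mkord.
Qed.

Lemma sum_pick2 p (a b : 'I_p) (g : 'I_p -> R) :
  \sum_r g r * ((r == a) + (r == b))%N%:R = g a + g b.
Proof.
under eq_bigr => r _ do rewrite natrD mulrDr.
rewrite big_split /=; congr (_ + _).
  by rewrite (bigD1 a) //= eqxx mulr1 big1 ?addr0 // => r /negPf ->; rewrite mulr0.
by rewrite (bigD1 b) //= eqxx mulr1 big1 ?addr0 // => r /negPf ->; rewrite mulr0.
Qed.

End S.



Lemma norm_le (R : realType) (n m : nat) (V : 'M[R]_(n, m)) (lam : R) : 0 < lam ->
  (forall l q, \sum_u V l u * V q u = if l == q then lam else 0) ->
  forall x : 'cV[R]_m, \sum_l ((V *m x) l 0) ^+ 2 <= lam * \sum_i (x i 0) ^+ 2.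
Proof.
move=> hl hg x.
set y := fun l => (V *m x) l 0.
have hy : forall l, y l = \sum_i V l i * x i 0 by move=> l; rewrite /y mxE.
pose w i := \sum_l V l i * y l.
have F1 : \sum_i x i 0 * w i = \sum_l y l ^+ 2.
  rewrite /w; under eq_bigr => i _ do rewrite mulr_sumr.
  rewrite exchange_big /=; apply: eq_bigr => l _.
  rewrite expr2 {3}hy mulr_sumr; apply: eq_bigr => i _; ring.
have F2 : \sum_i w i ^+ 2 = lam * \sum_l y l ^+ 2.
  transitivity (\sum_i \sum_l \sum_q (V l i * y l) * (V q i * y q)).
    apply: eq_bigr => i _; rewrite /w expr2 mulr_suml; apply: eq_bigr => l _.
    by rewrite mulr_sumr.
  rewrite exchange_big /=.
  transitivity (\sum_l \sum_q y l * y q * (\sum_i V l i * V q i)).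
    apply: eq_bigr => l _; rewrite exchange_big /=; apply: eq_bigr => q _.
    rewrite mulr_sumr; apply: eq_bigr => i _; ring.
  rewrite mulr_sumr; apply: eq_bigr => l _.
  rewrite (bigD1 l) //= hg eqxx big1 ?addr0; first by rewrite expr2; ring.
  by move=> q hq; rewrite hg eq_sym (negPf hq) mulr0.
have h0 : 0 <= \sum_i (x i 0 - w i / lam) ^+ 2 by apply: sumr_ge0 => i _; apply: sqr_ge0.
have E : \sum_i (x i 0 - w i / lam) ^+ 2 = \sum_i x i 0 ^+ 2
    - 2 / lam * \sum_i x i 0 * w i + 1 / lam ^+ 2 * \sum_i w i ^+ 2.
  rewrite !mulr_sumr -sumrB -big_split /=; apply: eq_bigr => i _.
  by field; rewrite gt_eqF.
rewrite E F1 F2 in h0.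
set X := \sum_i x i 0 ^+ 2 in h0 *.
set Y := \sum_l y l ^+ 2 in h0 *.
have h2 : 0 <= lam * (X - 2 / lam * Y + 1 / lam ^+ 2 * (lam * Y)) by apply: mulr_ge0 => //; apply: ltW.
have -> : Y = lam * X - lam * (X - 2 / lam * Y + 1 / lam ^+ 2 * (lam * Y)).
  by field; rewrite gt_eqF.
lra.
Qed.



Section Main.
Variable R : realType.
Variable p : nat.

Definition cc : R := 17/7.
Definition ang (k j r : nat) : R :=
  if (j < 10)%N then alpha R p k r else alpha R p k r - pi/4.
Definition Wf (k j r : nat) : R :=
  if (j < 20)%N then wt R (j %% 10)%N (ang k j r) else 0.
Definition Vf (l k j : nat) : R :=
  if (j < 20)%N then cc * co R (j %% 10)%N *
    (if (j < 10)%N then cos (alpha R p k l) else sin (alpha R p k l)) else 0.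

Lemma split36 (G : nat -> R) :
  \sum_(j < 36) G j = \sum_(0 <= j < 10) G j + \sum_(0 <= j < 10) G (j + 10)%N
     + \sum_(20 <= j < 36) G j.
Proof.
rewrite -(big_mkord xpredT) (big_cat_nat (n:=20)) // (big_cat_nat (n:=10)) //.
by rewrite -{2}(add0n 10%N) big_addn.
Qed.

Lemma perk (a b l k : nat) :
  \sum_(j < 36) Vf l k j * Num.max 0 (Wf k j a + Wf k j b) =
  cc * (cos (alpha R p k l) * fam R (alpha R p k a) (alpha R p k b)
      + sin (alpha R p k l) * fam R (alpha R p k a - pi/4) (alpha R p k b - pi/4)).
Proof.
rewrite (split36 (fun j => Vf l k j * Num.max 0 (Wf k j a + Wf k j b))).
have -> : \sum_(20 <= j < 36) Vf l k j * Num.max 0 (Wf k j a + Wf k j b) = 0.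
  rewrite big_nat_cond big1 // => j /andP[/andP[h1 h2] _].
  by rewrite /Vf ltnNge h1 /= mul0r.
rewrite addr0 mulrDr /fam !mulr_sumr.
congr (_ + _); rewrite big_nat_cond [RHS]big_nat_cond; apply: eq_bigr => j /andP[/andP[_ hj] _].
  have hj20 : (j < 20)%N by lia.
  rewrite /Vf /Wf /ang hj20 hj (modn_small hj).
  set m := Num.max _ _; ring.
have e1 : (j + 10 < 20)%N by lia.
have e2 : (j + 10 < 10)%N = false by lia.
have e3 : ((j + 10) %% 10 = j)%N by rewrite modnDr modn_small.
rewrite /Vf /Wf /ang e1 e2 e3.
set m := Num.max _ _; ring.
Qed.


Lemma perk_bound (a b l k : nat) :
  `| \sum_(j < 36) Vf l k j * Num.max 0 (Wf k j a + Wf k j b)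
     - cc * cos (alpha R p k a + alpha R p k b - alpha R p k l) | <= cc / 4.
Proof.
rewrite perk.
set y1 := alpha R p k a; set y2 := alpha R p k b; set g := alpha R p k l.
have f1 := fam_bound R y1 y2.
have f2 := fam_bound R (y1 - pi/4) (y2 - pi/4).
have eq : y1 - pi / 4 + (y2 - pi / 4) = (y1 + y2) - pi/2 by field.
rewrite eq cosBpihalf in f2.
move: f1 f2.
set e1 := fam R y1 y2 - cos (y1 + y2).
set e2 := fam R (y1 - pi / 4) (y2 - pi / 4) - sin (y1 + y2).
move=> f1 f2.
have -> : fam R y1 y2 = cos (y1 + y2) + e1 by rewrite /e1; ring.
have -> : fam R (y1 - pi / 4) (y2 - pi / 4) = sin (y1 + y2) + e2 by rewrite /e2; ring.
rewrite cosB.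
have -> : cc * (cos g * (cos (y1 + y2) + e1) + sin g * (sin (y1 + y2) + e2)) -
   cc * (cos (y1 + y2) * cos g + sin (y1 + y2) * sin g) = cc * (cos g * e1 + sin g * e2) by ring.
have hcc : 0 < cc by rewrite /cc; lra.
rewrite normrM (gtr0_norm hcc).
have h1 : `|cos g * e1| <= 1/8.
  rewrite normrM; have := cos_max g; have := normr_ge0 e1; have := normr_ge0 (cos g); nra.
have h2 : `|sin g * e2| <= 1/8.
  rewrite normrM; have := sin_max g; have := normr_ge0 e2; have := normr_ge0 (sin g); nra.
have h3 := ler_normD (cos g * e1) (sin g * e2).
have : `|cos g * e1 + sin g * e2| <= 1/4 by lra.
move=> h; apply: le_trans (ler_wpM2l (ltW hcc) h) _; rewrite /cc; lra.
Qed.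

Lemma alpha_N (a b l k : nat) : (l <= p)%N -> (0 < p)%N ->
  cos (alpha R p k a + alpha R p k b - alpha R p k l) = cos (alpha R p k (a + b + (p - l))).
Proof.
move=> hl hp.
have -> : alpha R p k (a + b + (p - l)) =
   (alpha R p k a + alpha R p k b - alpha R p k l) + (pi *+ 2) *+ k.
  rewrite /alpha -mulr_natr !natrD natrB //.
  have hp' : (p%:R : R) != 0 by rewrite pnatr_eq0 -lt0n.
  by field.
by rewrite (periodicn (@cosD2pi R)).
Qed.

Lemma dvd_lab (m l : nat) : (l < p)%N -> (p %| m + (p - l))%N = ((m %% p)%N == l).
Proof.
move=> hl.
have hp : (0 < p)%N by lia.
rewrite /dvdn -modnDml.
set r := (m %% p)%N.
have hr : (r < p)%N by rewrite /r ltn_mod.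
case: (ltngtP r l) => h.
- rewrite modn_small; last lia.
  by apply/eqP; lia.
- have -> : (r + (p - l) = p + (r - l))%N by lia.
  rewrite modnDl modn_small; last lia.
  by apply/eqP; lia.
- have -> : (r + (p - l) = p)%N by lia.
  by rewrite modnn.
Qed.


Definition Wm : 'M[R]_(36 * p, p) :=
  \matrix_(u < 36 * p, r < p) Wf (u %/ 36)%N (u %% 36)%N r.
Definition Vm : 'M[R]_(p, 36 * p) :=
  \matrix_(l < p, u < 36 * p) Vf l (u %/ 36)%N (u %% 36)%N.

Lemma scoreE (c : 'I_p -> nat) (a b : 'I_p) :
  (forall r, c r = ((r == a) + (r == b))%N) -> forall l : 'I_p,
  (scores Wm Vm (embed R c)) l 0 =
    \sum_(k < p) \sum_(j < 36) Vf l k j * Num.max 0 (Wf k j a + Wf k j b).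
Proof.
move=> hc l; rewrite /scores /relu mxE.
rewrite -(sum36 _ (fun k j => Vf l k j * Num.max 0 (Wf k j a + Wf k j b))).
apply: eq_bigr => u _; rewrite !mxE; congr (_ * Num.max 0 _).
rewrite /embed; under eq_bigr => r _ do rewrite !mxE hc.
by rewrite (sum_pick2 _ _ _ _ (fun r : 'I_p => Wf (u %/ 36)%N (u %% 36)%N r)).
Qed.

Lemma score_est (a b l : nat) : (l < p)%N ->
  `| \sum_(k < p) \sum_(j < 36) Vf l k j * Num.max 0 (Wf k j a + Wf k j b)
     - cc * (if ((a + b) %% p == l)%N then p%:R else 0) | <= cc * p%:R / 4.
Proof.
move=> hl; have hp : (0 < p)%N by lia.
rewrite -dvd_lab // -cos_sum // mulr_sumr -sumrB.
apply: le_trans (ler_norm_sum _ _ _) _.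
apply: (@le_trans _ _ (\sum_(k < p) cc / 4)).
  apply: ler_sum => k _; rewrite -alpha_N //; last lia.
  exact: perk_bound.
rewrite sumr_const card_ord -mulr_natr; lra.
Qed.

Lemma gramk (l q k : nat) :
  \sum_(j < 36) Vf l k j * Vf q k j
   = cc ^+ 2 * (41/2) * cos (alpha R p k l - alpha R p k q).
Proof.
rewrite (split36 (fun j => Vf l k j * Vf q k j)).
have -> : \sum_(20 <= j < 36) Vf l k j * Vf q k j = 0.
  rewrite big_nat_cond big1 // => j /andP[/andP[h1 h2] _].
  by rewrite /Vf ltnNge h1 /= mul0r.
have S : \sum_(0 <= j < 10) co R j ^+ 2 = 41/2.
  by rewrite !big_nat_recl // big_geq //=; field.
have -> : \sum_(0 <= j < 10) Vf l k j * Vf q k j =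
    \sum_(0 <= j < 10) co R j ^+ 2 * (cc ^+ 2 * cos (alpha R p k l) * cos (alpha R p k q)).
  rewrite big_nat_cond [RHS]big_nat_cond; apply: eq_bigr => j /andP[/andP[_ hj] _].
  have hj20 : (j < 20)%N by lia.
  rewrite /Vf hj20 hj (modn_small hj); ring.
have -> : \sum_(0 <= j < 10) Vf l k (j + 10)%N * Vf q k (j + 10)%N =
    \sum_(0 <= j < 10) co R j ^+ 2 * (cc ^+ 2 * sin (alpha R p k l) * sin (alpha R p k q)).
  rewrite big_nat_cond [RHS]big_nat_cond; apply: eq_bigr => j /andP[/andP[_ hj] _].
  have e1 : (j + 10 < 20)%N by lia.
  have e2 : (j + 10 < 10)%N = false by lia.
  have e3 : ((j + 10) %% 10 = j)%N by rewrite modnDr modn_small.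
  rewrite /Vf e1 e2 e3; ring.
rewrite -!mulr_suml S cosB; ring.
Qed.

Lemma alpha_N2 (l q k : nat) : (q <= p)%N -> (0 < p)%N ->
  cos (alpha R p k l - alpha R p k q) = cos (alpha R p k (l + (p - q))).
Proof.
move=> hl hp.
have -> : alpha R p k (l + (p - q)) =
   (alpha R p k l - alpha R p k q) + (pi *+ 2) *+ k.
  rewrite /alpha -mulr_natr !natrD natrB //.
  have hp' : (p%:R : R) != 0 by rewrite pnatr_eq0 -lt0n.
  by field.
by rewrite (periodicn (@cosD2pi R)).
Qed.

Definition lam : R := cc ^+ 2 * (41/2) * p%:R.

Lemma gram (l q : 'I_p) :
  \sum_(u < 36 * p) Vm l u * Vm q u = if l == q then lam else 0.
Proof.
have hp : (0 < p)%N by case: p l => // -[].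
under eq_bigr => u _ do rewrite !mxE.
rewrite (sum36 _ (fun k j => Vf l k j * Vf q k j)).
under eq_bigr => k _ do rewrite gramk alpha_N2 // 1?ltnW //.
rewrite -mulr_sumr cos_sum // dvd_lab // modn_small //.
rewrite /lam; case: (eqVneq l q) => [->|/negPf h]; first by rewrite eqxx.
by rewrite (_ : (nat_of_ord l == q) = false) ?mulr0.
Qed.

Lemma wt_bound t y : `|wt R t y| <= 1.
Proof.
have := cos_le1 y; have := cos_geN1 y; have := sin_le1 y; have := sin_geN1 y.
have := cos_le1 (y *+ 2); have := cos_geN1 (y *+ 2).
move=> *.
do 10 (case: t => [|t]; first by rewrite /= ler_norml; apply/andP; split; lra).
by rewrite /= normr0.
Qed.

Lemma co_bound t : `|co R t| <= 2.
Proof.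
do 10 (case: t => [|t]; first by rewrite /= ler_norml; apply/andP; split; lra).
by rewrite /= normr0.
Qed.

Lemma bigmax_bound (m n : nat) (A : 'M[R]_(m, n)) (B : R) : 0 <= B ->
  (forall i j, `|A i j| <= B) -> maxabs A <= B.
Proof.
move=> hB hA; rewrite /maxabs; apply: (big_ind (fun v => v <= B)) => //.
  by move=> x y hx hy; rewrite ge_max hx hy.
move=> i _; apply: (big_ind (fun v => v <= B)) => //.
  by move=> x y hx hy; rewrite ge_max hx hy.
Qed.

Lemma maxabsW : maxabs Wm <= 1.
Proof.
apply: bigmax_bound => // i j; rewrite mxE /Wf; case: ifP => _; last by rewrite normr0.
exact: wt_bound.
Qed.

Lemma maxabsV : maxabs Vm <= 34%:R / 7%:R.
Proof.
apply: bigmax_bound => [|i j]; first lra.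
rewrite mxE /Vf; case: ifP => _; last by rewrite normr0; lra.
rewrite !normrM.
have h1 := co_bound (j %% 36 %% 10)%N.
have h2 : `|if (j %% 36 < 10)%N then cos (alpha R p (j %/ 36) i) else sin (alpha R p (j %/ 36) i)| <= 1.
  by case: ifP => _; [apply: cos_max | apply: sin_max].

rewrite (ger0_norm (x := 17)) // (ger0_norm (x := 7^-1)) //; last by rewrite invr_ge0.
have := normr_ge0 (co R (j %% 36 %% 10)%N).
have := normr_ge0 (if (j %% 36 < 10)%N then cos (alpha R p (j %/ 36) i) else sin (alpha R p (j %/ 36) i)).
nra.
Qed.

End Main.



Theorem mainTheorem13 (R : realType) (p : nat) (hp : (2 <= p)%N) :
  exists (W : 'M[R]_(36 * p, p)) (V : 'M[R]_(p, 36 * p)),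
    (forall c : 'I_p -> nat, inX2 c ->
       exists l : 'I_p, (l : nat) = label c /\
         predict (scores W V (embed R c)) = Some l /\
         (scores W V (embed R c)) l 0 - max_other (scores W V (embed R c)) l
           >= (25%:R / 49%:R) * p%:R + 20%:R / 49%:R) /\
    maxabs W <= 1 /\
    maxabs V <= 34%:R / 7%:R /\
    specnorm V <= 11%:R * Num.sqrt (p%:R).
Proof.
exists (Wm R p), (Vm R p).
have hp0 : (0 < p)%N by lia.
have hpR : (2 : R) <= p%:R by rewrite ler_nat.
have hcc : cc R = 17 / 7 by [].
split; last split; [| exact: maxabsW | split; [exact: maxabsV |]].
- move=> c hc.
  have [a [b hab]] := inX2_pair _ _ hc.
  pose L : 'I_p := Ordinal (ltn_pmod (a + b) hp0).
  exists L; split.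
    rewrite /label /=; congr (_ %% _)%N.
    under eq_bigr => r _ do rewrite hab mulnDr.
    rewrite big_split /=; congr (_ + _)%N.
      by rewrite (bigD1 a) //= eqxx muln1 big1 ?addn0 // => r /negPf ->; rewrite muln0.
    by rewrite (bigD1 b) //= eqxx muln1 big1 ?addn0 // => r /negPf ->; rewrite muln0.
  set s := scores _ _ _.
  have sE := scoreE R p c a b hab.
  have hL : 3/4 * (cc R * p%:R) <= s L 0.
    rewrite /s sE; have := score_est R p a b L (ltn_ord L).
    rewrite (_ : ((a + b) %% p == L)%N = true); last by rewrite /= eqxx.
    rewrite ler_norml => /andP[h1 h2]; lra.
  have hq : forall q : 'I_p, q != L -> s q 0 <= cc R * p%:R / 4.
    move=> q hqL; rewrite /s sE; have := score_est R p a b q (ltn_ord q).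
    rewrite (_ : ((a + b) %% p == q)%N = false); last first.
      apply/negP => /eqP e; move/eqP: hqL; apply; apply: val_inj; by rewrite /= e.
    rewrite mulr0 subr0 => h.
    exact: le_trans (ler_norm _) h.
  rewrite hcc in hL hq.
  split.
    rewrite /predict; case: pickP => [x hx|hn].
      congr Some; apply/eqP; apply/negPn/negP => hxL.
      move/forallP: hx => /(_ L); rewrite eq_sym hxL /= => hlt.
      have := hq x hxL; lra.
    exfalso; move: (hn L) => /= /negP; apply.
    apply/forallP => k; apply/implyP => hk.
    have := hq k hk; lra.
  have hmo : max_other s L <= 17 / 7 * p%:R / 4.
    rewrite /max_other; apply: ge_sup.
      have [q hqL] : exists q : 'I_p, q != L.
        case: (eqVneq L (Ordinal hp0)) => e.
          exists (Ordinal hp); rewrite e; apply/eqP => /(congr1 val) /=; lia.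
        by exists (Ordinal hp0); rewrite eq_sym.
      by exists (s q 0); exists q.
    by move=> _ [q hqL <-]; apply: hq.
  lra.
- rewrite /specnorm; apply: ge_sup.
    exists (vnorm (Vm R p *m 0)); exists 0 => //.
    by rewrite /= /vnorm big1 ?sqrtr0 // => i _; rewrite mxE expr0n.
  move=> _ [x hx <-].
  have hlam : 0 < lam R p.
    rewrite /lam hcc; have h : (0 : R) < p%:R by lra.
    rewrite expr2; nra.
  have H := norm_le _ _ _ _ _ hlam (gram R p) x.
  move: hx; rewrite /= /vnorm.
  set X := \sum_i x i 0 ^+ 2; set Y := \sum_l (Vm R p *m x) l 0 ^+ 2 in H *.
  move=> hx.
  have X0 : 0 <= X by apply: sumr_ge0 => i _; apply: sqr_ge0.
  have hX : X <= 1.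
    have := sqr_sqrtr X0; have := sqrtr_ge0 X; move=> h1 h2.
    rewrite -h2 expr2; nra.
  have -> : 11%:R * Num.sqrt p%:R = Num.sqrt (11%:R ^+ 2 * p%:R) :> R.
    by rewrite sqrtrM ?sqrtr_sqr ?ger0_norm // ?exprn_ge0.
  apply: ler_wsqrtr.
  rewrite /lam hcc in H hlam.
  have H2 := ler_wpM2l (ltW hlam) hX.
  rewrite -/X in H.
  rewrite !expr2 in H H2 *; lra.
Qed.
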